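(* Let $E$ be a functional defined on all $n$-qubit pure states, for all natural numbers $n$. Suppose (i) $E$ is a type I entanglement monotone, and (ii) $E(|\psi\rangle|0\rangle)=E(|\psi\rangle)$ for every multi-qubit state $|\psi\rangle$. Then $E$ is a type II entanglement monotone.
   Context: A type I entanglement monotone is a functional $M$ such that, for every $n$ and every LOCC protocol (each qubit a separate party) applied to an $n$-qubit state $|\psi\rangle$ yielding $n$-qubit output states $|\psi_i\rangle$ with probabilities $p_i$, one has $M(|\psi\rangle)\ge\sum_i p_iM(|\psi_i\rangle)$. For an $N$-qubit $|\psi\rangle$ and an $n$-qubit $|\phi\rangle$, $n\le N$, write $|\psi\rangle\geq_{\mathrm{LOCC}}|\phi\rangle$ if for some set $A$ of $n$ qubits the transformation $|\psi\rangle\to|\phi\rangle^{A}|0\rangle^{\bar A}$ is achievable exactly and with probability one by LOCC. A type II entanglement monotone is a functional $E$ on all $n$-qubit states, all $n$, with $E(|\psi\rangle)\ge E(|\psi'\rangle)$ whenever $|\psi\rangle\geq_{\mathrm{LOCC}}|\psi'\rangle$. *)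

(* Defs.v *)
(* Complex numbers are  R[i]  (mathcomp-real-closed) over an
   arbitrary real closed field R (this includes the real numbers). *)
From HB Require Import structures.
From mathcomp Require Import all_boot all_order all_algebra.
From mathcomp Require Import complex.
Set Implicit Arguments. Unset Strict Implicit. Unset Printing Implicit Defensive.
Import Order.TTheory GRing.Theory Num.Theory.
Local Open Scope ring_scope.

Notation basis N := {ffun 'I_N -> bool}.

(* (unnormalised) vectors of the N-qubit Hilbert space C^(2^N), C = R[i] *)
Notation qstate R N := {ffun {ffun 'I_N -> bool} -> R[i]}.

Section Qubits.
Variable R : rcfType.
Local Notation C := R[i].
Local Notation qstate N := (qstate R N).

(* squared norm <v|v> (a nonnegative real, stored in C) *)
Definition sqnorm N (v : qstate N) : C := \sum_(x : basis N) `|v x| ^+ 2.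

Definition normalize N (v : qstate N) : qstate N :=
  [ffun x : basis N => v x / sqrtC (sqnorm v)].

(* a single-qubit operator, as its matrix  K a b = <a|K|b> *)
Definition qop := bool -> bool -> C.

Definition setbit N (x : basis N) (j : 'I_N) (b : bool) : basis N :=
  [ffun i => if i == j then b else x i].

Definition apply1 N (K : qop) (j : 'I_N) (v : qstate N) : qstate N :=
  [ffun x : basis N => \sum_(b : bool) K (x j) b * v (setbit x j b)].

Definition kraus_complete k (K : 'I_k -> qop) : Prop :=
  forall a b : bool,
    \sum_(m < k) \sum_(c : bool) (K m c a)^* * K m c b = (a == b)%:R.

(* finite-round LOCC protocols, each qubit being a separate party:
   at each node one party j performs a local measurement with Kraus
   operators K_0..K_{k-1} on its qubit; the outcome is broadcast and the
   rest of the protocol may depend on it. *)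
Inductive protocol (N : nat) : Type :=
| Stop
| Measure (j : 'I_N) (k : nat) (K : 'I_k -> qop) (next : 'I_k -> protocol N).

Fixpoint valid N (p : protocol N) : Prop :=
  match p with
  | Stop => True
  | Measure j k K next => kraus_complete K /\ forall m, valid (next m)
  end.

(* the unnormalised output branches: branch v occurs with probability
   <v|v> and leaves the state v/||v|| *)
Fixpoint run N (p : protocol N) (v : qstate N) : seq (qstate N) :=
  match p with
  | Stop => [:: v]
  | Measure j k K next =>
      flatten [seq run (next m) (apply1 (K m) j v) | m <- enum 'I_k]
  end.

Definition typeI (E : forall n, qstate n -> R) : Prop :=
  forall n (p : protocol n) (psi : qstate n),
    valid p -> sqnorm psi = 1 ->
    (\sum_(v <- run p psi | sqnorm v != 0) complex.Re (sqnorm v) * E n (normalize v) : R)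
      <= E n psi.

(* |phi>^A |0>^(complement A), where A is the image of the strictly
   increasing map f (qubit k of phi sits at position f k) *)
Definition embed n N (f : 'I_n -> 'I_N) (phi : qstate n) : qstate N :=
  [ffun x : basis N => if [forall i, (i \notin codom f) ==> ~~ x i]
             then phi [ffun k => x (f k)] else 0].

(* psi >=_LOCC phi : exact, probability-one LOCC conversion of psi into
   |phi>^A|0>^(not A) (every branch equals the target up to a scalar,
   i.e. the output state is the target up to a global phase) *)
Definition LOCC_ge N n (psi : qstate N) (phi : qstate n) : Prop :=
  (n <= N)%N /\
  exists f : 'I_n -> 'I_N, (forall i j : 'I_n, (i < j)%N -> (f i < f j)%N) /\
  exists p : protocol N, valid p /\
    forall v, v \in run p psi -> exists c : C, forall x, v x = c * embed f phi x.

Definition typeII (E : forall n, qstate n -> R) : Prop :=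
  forall N n (psi : qstate N) (phi : qstate n),
    sqnorm psi = 1 -> sqnorm phi = 1 -> LOCC_ge psi phi -> E n phi <= E N psi.

Definition insert0 n (j : 'I_n.+1) (psi : qstate n) : qstate n.+1 :=
  [ffun x : basis n.+1 => if x j then 0 else psi [ffun k => x (lift j k)]].

Definition zero_invariant (E : forall n, qstate n -> R) : Prop :=
  forall n (j : 'I_n.+1) (psi : qstate n),
    sqnorm psi = 1 -> E n.+1 (insert0 j psi) = E n psi.

End Qubits.

(* Main.v *)
Require Import Defs.
From HB Require Import structures.
From mathcomp Require Import all_boot all_order all_algebra.
From mathcomp Require Import complex.
From mathcomp Require Import ring zify.
Set Implicit Arguments. Unset Strict Implicit. Unset Printing Implicit Defensive.
Import Order.TTheory GRing.Theory Num.Theory.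
Local Open Scope ring_scope.

Section Helpers.
Variable R : rcfType.
Local Notation C := R[i].
Local Notation bs N := {ffun 'I_N -> bool}.

Lemma setbit_id N (x : bs N) j : setbit x j (x j) = x.
Proof. by apply/ffunP=> i; rewrite ffunE; case: eqP => // ->. Qed.

Lemma setbitE N (x : bs N) j b : setbit x j b j = b.
Proof. by rewrite ffunE eqxx. Qed.

Lemma setbitK N (x : bs N) j b c : setbit (setbit x j c) j b = setbit x j b.
Proof. by apply/ffunP=> i; rewrite !ffunE; case: eqP. Qed.

Lemma sum_split N (j : 'I_N) (G : bs N -> C) :
  \sum_x G x = \sum_(x : bs N | ~~ x j) (G (setbit x j true) + G (setbit x j false)).
Proof.
rewrite (bigID (fun x : bs N => x j)) /= big_split /=.
congr (_ + _); last first.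
  by apply: eq_bigr => x /negbTE xj; rewrite -{1}xj setbit_id.
pose h (x : bs N) := setbit x j (~~ x j).
have hK : involutive h by move=> x; rewrite /h setbitK setbitE negbK setbit_id.
rewrite (reindex_inj (inv_inj hK)) /=.
apply: eq_big => x; first by rewrite /h setbitE.
by rewrite /h setbitE => /negbTE ->.
Qed.

Lemma kraus_local k (K : 'I_k -> qop R) (a : bool -> C) :
  kraus_complete K ->
  \sum_(m < k) \sum_(c : bool) `|\sum_(b : bool) K m c b * a b| ^+ 2
  = \sum_(b : bool) `|a b| ^+ 2.
Proof.
move=> HK.
have E1 m c : `|\sum_(b : bool) K m c b * a b| ^+ 2 =
   \sum_(b : bool) \sum_(b' : bool) (a b * (a b')^* ) * ((K m c b')^* * K m c b).
  rewrite normCK rmorph_sum mulr_suml; apply: eq_bigr => b _.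
  rewrite mulr_sumr; apply: eq_bigr => b' _; rewrite rmorphM; ring.
under eq_bigr => m _ do under eq_bigr => c _ do rewrite E1.
under eq_bigr => m _ do rewrite exchange_big.
under eq_bigr => m _ do under eq_bigr => b _ do rewrite exchange_big.
rewrite exchange_big.
under eq_bigr => b _ do rewrite exchange_big.
have E2 b b' : \sum_(m < k) \sum_(c : bool) (a b * (a b')^* ) * ((K m c b')^* * K m c b)
   = (a b * (a b')^* ) * (b' == b)%:R.
  rewrite -HK mulr_sumr; apply: eq_bigr => m _; by rewrite mulr_sumr.
under eq_bigr => b _ do under eq_bigr => b' _ do rewrite E2.
apply: eq_bigr => b _; rewrite normCK big_bool /=.
by case: b => /=; rewrite ?mulr1 ?mulr0 ?addr0 ?add0r.
Qed.

Lemma sqnorm_split N (j : 'I_N) (v : qstate R N) :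
  sqnorm v = \sum_(x : bs N | ~~ x j) \sum_(b : bool) `|v (setbit x j b)| ^+ 2.
Proof. by rewrite /sqnorm (sum_split j); apply: eq_bigr => x _; rewrite big_bool. Qed.

Lemma kraus_sum N k (K : 'I_k -> qop R) (j : 'I_N) (v : qstate R N) :
  kraus_complete K ->
  \sum_(m < k) sqnorm (apply1 (K m) j v) = sqnorm v.
Proof.
move=> HK.
under eq_bigr => m _ do rewrite (sqnorm_split j).
rewrite exchange_big (sqnorm_split j); apply: eq_bigr => x _.
rewrite -(kraus_local (fun b => v (setbit x j b)) HK).
apply: eq_bigr => m _; apply: eq_bigr => c _.
rewrite ffunE setbitE; congr (`| _ | ^+ 2); apply: eq_bigr => b _.
by rewrite setbitK.
Qed.

Lemma run_sum N (p : protocol R N) (v : qstate R N) :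
  valid p -> \sum_(w <- run p v) sqnorm w = sqnorm v.
Proof.
elim: p v => [|j k K next IH] v /=; first by rewrite big_seq1.
case=> HK Hn.
rewrite big_flatten /= big_map big_enum /=.
rewrite -(kraus_sum j v HK); apply: eq_bigr => m _; exact: IH.
Qed.

Definition sc N (u : C) (v : qstate R N) : qstate R N := [ffun x => u * v x].

Lemma sqnorm_sc N u (v : qstate R N) : sqnorm (sc u v) = `|u| ^+ 2 * sqnorm v.
Proof.
rewrite /sqnorm mulr_sumr; apply: eq_bigr => x _.
by rewrite ffunE normrM exprMn.
Qed.

Definition restr n (j : 'I_n.+1) (x : bs n.+1) : bs n := [ffun k => x (lift j k)].
Definition ext n (j : 'I_n.+1) (y : bs n) : bs n.+1 :=
  [ffun i => if unlift j i is Some k then y k else false].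

Lemma sqnorm_insert0 n (j : 'I_n.+1) (w : qstate R n) :
  sqnorm (insert0 j w) = sqnorm w.
Proof.
rewrite /sqnorm (bigID (fun x : bs n.+1 => x j)) /=.
rewrite big1 ?add0r => [|x xj]; last by rewrite ffunE xj normr0 expr0n.
rewrite (reindex_onto (ext j) (restr j)) /=; last first.
  move=> x /negbTE xj; apply/ffunP => i; rewrite !ffunE.
  by case: unliftP => [k ->|->]; rewrite ?ffunE.
apply: eq_big => y.
  rewrite !ffunE unlift_none /=; apply/eqP/ffunP => k.
  by rewrite !ffunE liftK.
move=> _; rewrite !ffunE unlift_none /=; congr (`|w _| ^+ 2).
by apply/ffunP => k; rewrite !ffunE liftK.
Qed.

Lemma insert0_sc n (j : 'I_n.+1) u (w : qstate R n) :
  insert0 j (sc u w) = sc u (insert0 j w).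
Proof. by apply/ffunP => x; rewrite !ffunE; case: (x j); rewrite ?mulr0 ?ffunE. Qed.

Lemma normalize1 N (v : qstate R N) : sqnorm v = 1 -> normalize v = v.
Proof. by move=> h; apply/ffunP => x; rewrite ffunE h sqrtC1 divr1. Qed.

Definition phaseK (u : C) : qop R := fun a b => u * (a == b)%:R.

Lemma phase1 (E : forall n, qstate R n -> R) n (u : C) (w : qstate R n.+1) :
  typeI E -> `|u| = 1 -> sqnorm w = 1 -> E n.+1 (sc u w) <= E n.+1 w.
Proof.
move=> HI hu hw.
have Hv : valid (Measure ord0 (fun _ : 'I_1 => phaseK u) (fun _ => Stop R n.+1)).
  split=> // a b; rewrite big_ord1 big_bool /phaseK !rmorphM !rmorph_nat.
  have uu : u^* * u = 1 by rewrite -normCKC hu expr1n.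
  by case: a; case: b => /=; rewrite ?mulr0 ?mul0r ?addr0 ?add0r ?mulr1 ?uu.
have := HI _ _ _ Hv hw.
rewrite /= big_flatten /= big_map big_enum /= big_ord1 big_mkcond big_seq1.
have ->: apply1 (phaseK u) ord0 w = sc u w.
  apply/ffunP => x; rewrite !ffunE (bigD1 (x ord0)) //= setbit_id /phaseK eqxx mulr1.
  rewrite big1 ?addr0 // => b /negbTE hb; by rewrite eq_sym hb mulr0 mul0r.
have hs : sqnorm (sc u w) = 1 by rewrite sqnorm_sc hu hw expr1n mulr1.
by rewrite hs oner_eq0 /= normalize1 // mul1r.
Qed.

Lemma phase (E : forall n, qstate R n -> R) n (u : C) (w : qstate R n) :
  typeI E -> zero_invariant E -> `|u| = 1 -> sqnorm w = 1 -> E n (sc u w) = E n w.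
Proof.
move=> HI HZ hu hw.
have hs : sqnorm (sc u w) = 1 by rewrite sqnorm_sc hu hw expr1n mulr1.
rewrite -(HZ n ord0 w hw) -(HZ n ord0 (sc u w) hs) insert0_sc.
set W := insert0 ord0 w.
have hW : sqnorm W = 1 by rewrite sqnorm_insert0.
have huW : sqnorm (sc u W) = 1 by rewrite sqnorm_sc hu hW expr1n mulr1.
apply/le_anti/andP; split; first exact: phase1.
have uu : u^* * u = 1 by rewrite -normCKC hu expr1n.
have e : sc u^* (sc u W) = W by apply/ffunP => x; rewrite !ffunE mulrA uu mul1r.
have := phase1 HI (u := u^* ) _ huW; rewrite e; apply.
by rewrite norm_conjC.
Qed.

Definition incr n N (f : 'I_n -> 'I_N) := forall i j : 'I_n, (i < j)%N -> (f i < f j)%N.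

Lemma incr_ge n N (f : 'I_n -> 'I_N) : incr f -> forall i : 'I_n, (i <= f i)%N.
Proof.
move=> hf; suff: forall k (hk : (k < n)%N), (k <= f (Ordinal hk))%N.
  by move=> h [k hk]; exact: h.
elim=> [|k IH] hk //.
have hk' : (k < n)%N by exact: ltnW.
have := hf (Ordinal hk') (Ordinal hk) (ltnSn k).
have := IH hk'. exact: leq_ltn_trans.
Qed.

Lemma incr_id n (f : 'I_n -> 'I_n) : incr f -> forall i, f i = i.
Proof.
move=> hf i; apply: val_inj => /=.
pose g (i : 'I_n) := rev_ord (f (rev_ord i)).
have hg : incr g.
  move=> a b hab; rewrite /g /=.
  have h1 : (rev_ord b < rev_ord a)%N by rewrite /= ; have := ltn_ord b; have := ltn_ord a; lia.
  have := hf _ _ h1; have := ltn_ord (f (rev_ord a)); have := ltn_ord (f (rev_ord b)); lia.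
have := incr_ge hg (rev_ord i); rewrite /g rev_ordK /=.
have := incr_ge hf i; have := ltn_ord i; have := ltn_ord (f i); lia.
Qed.

Lemma embed_id n (f : 'I_n -> 'I_n) (phi : qstate R n) : incr f -> embed f phi = phi.
Proof.
move=> hf; apply/ffunP => x; rewrite ffunE.
have -> : [forall i, (i \notin codom f) ==> ~~ x i].
  apply/forallP => i; apply/implyP; rewrite -{1}(incr_id hf i) codom_f //.
congr (phi _); apply/ffunP => k; by rewrite ffunE incr_id.
Qed.

Lemma embed_lift M n (f : 'I_n -> 'I_M.+1) (f' : 'I_n -> 'I_M) (j : 'I_M.+1)
  (phi : qstate R n) :
  j \notin codom f -> (forall i, f i = lift j (f' i)) ->
  embed f phi = insert0 j (embed f' phi).
Proof.
move=> hj hf'.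
have memlift i' : (lift j i' \in codom f) = (i' \in codom f').
  apply/codomP/codomP => [[k e]|[k e]]; exists k.
    by apply: (@lift_inj _ j); rewrite -hf'.
  by rewrite hf' e.
apply/ffunP => x; rewrite !ffunE.
have ea : [ffun k => x (f k)] = [ffun k => [ffun k0 => x (lift j k0)] (f' k)].
  by apply/ffunP => k; rewrite !ffunE hf'.
have ec : [forall i, (i \notin codom f) ==> ~~ x i] =
   ~~ x j && [forall i, (i \notin codom f') ==> ~~ [ffun k => x (lift j k)] i].
  apply/forallP/andP => [h|[hxj h'] i].
    split; first by have := h j; rewrite hj.
    apply/forallP => i'; rewrite ffunE -memlift; exact: h.
  apply/implyP; case: (unliftP j i) => [k -> hi|-> _ //].
  have := forallP h' k; rewrite ffunE -memlift hi; exact.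
rewrite ec ea; case: (x j) => //=.
Qed.

Lemma embed_E (E : forall n, qstate R n -> R) : zero_invariant E ->
  forall N n (f : 'I_n -> 'I_N) (phi : qstate R n), (n <= N)%N -> incr f ->
  sqnorm phi = 1 -> sqnorm (embed f phi) = 1 /\ E N (embed f phi) = E n phi.
Proof.
move=> HZ; elim=> [|M IH] n f phi hn hf hphi.
  move: hn; rewrite leqn0 => /eqP e; subst n.
  by rewrite embed_id.
have [e|ne] := eqVneq n M.+1.
  by subst n; rewrite embed_id.
have hnM : (n <= M)%N by rewrite -ltnS ltn_neqAle ne.
have [j hj] : exists j : 'I_M.+1, j \notin codom f.
  case: (pickP (fun j : 'I_M.+1 => j \notin codom f)) => [j hj|h]; first by exists j.
  have : ('I_M.+1 \subset codom f).
    by apply/subsetP => j _; have := h j; rewrite /= => /negbFE.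
  move/subset_leq_card; rewrite card_ord.
  have := card_size (codom f); rewrite size_codom card_ord.
  move=> h1 h2; have := leq_trans h2 h1; rewrite ltnNge hnM //.
have /fin_all_exists [f' hf'] : forall i, exists k : 'I_M, f i = lift j k.
  move=> i.
  have hi := codom_f f i.
  case: (unliftP j (f i)) hi => [k -> _|->]; first by exists k.
  by rewrite (negbTE hj).
have hf2 : incr f'.
  move=> a b hab; rewrite ltnNge; apply/negP => h.
  have := hf a b hab; rewrite !hf' /= ltnNge.
  by rewrite leq_bump2 h.
have [h1 h2] := IH n f' phi hnM hf2 hphi.
rewrite (embed_lift phi hj hf') sqnorm_insert0 h1 (HZ _ _ _ h1) h2.
by [].
Qed.
End Helpers.

Lemma Re_sumC (R : rcfType) (T : Type) (s : seq T) (F : T -> R[i]) :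
  complex.Re (\sum_(v <- s) F v) = \sum_(v <- s) complex.Re (F v).
Proof.
elim: s => [|a s IH]; first by rewrite !big_nil.
by rewrite !big_cons -IH; case: (F a); case: (\sum_(v <- s) F v).
Qed.

Theorem theorem2 (R : rcfType) (E : forall n : nat, qstate R n -> R) :
  typeI E -> zero_invariant E -> typeII E.
Proof.
move=> HI HZ N n psi phi hpsi hphi [hn [f [hf [p [hp hrun]]]]].
have [hT eT] := embed_E HZ hn hf hphi.
set T := embed f phi in hT eT hrun *.
rewrite -eT; apply: le_trans (HI N p psi hp hpsi).
have step : \sum_(v <- run p psi | sqnorm v != 0) complex.Re (sqnorm v) * E N (normalize v)
   = \sum_(v <- run p psi) complex.Re (sqnorm v) * E N T.
  rewrite big_mkcond big_seq [RHS]big_seq; apply: eq_bigr => v hv.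
  have [c hc] := hrun v hv.
  have ev : v = sc c T by apply/ffunP => x; rewrite ffunE hc.
  have hsv : sqnorm v = `|c| ^+ 2 by rewrite ev sqnorm_sc hT mulr1.
  case: ifP => [hne|/negbFE/eqP h0]; last by rewrite h0 mul0r.
  have cn0 : `|c| != 0.
    by apply: contraNneq hne => h; rewrite hsv h expr0n.
  have en : normalize v = sc (c / `|c|) T.
    by apply/ffunP => x; rewrite ffunE hsv sqrCK // hc [RHS]ffunE mulrAC.
  rewrite en phase //.
  by rewrite normrM normfV normr_id divff.
rewrite step -mulr_suml -Re_sumC run_sum // hpsi /= mul1r.
by [].
Qed.
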